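(* Let $n\geq3$. Then $\Gamma_2(B_n(\mathbb{K}))=\Gamma_i(B_n(\mathbb{K}))$ for all $i\geq3$, and this subgroup equals the normal closure of $\sigma_2^{-1}\sigma_1$ in $B_n(\mathbb{K})$; it is nontrivial, so $B_n(\mathbb{K})$ is not residually nilpotent.
   Context: $\mathbb{K}$ is the Klein bottle. $B_n(\mathbb{K})$ has the presentation with generators $a,b,\sigma_1,\ldots,\sigma_{n-1}$ and relations: $\sigma_i\sigma_{i+1}\sigma_i=\sigma_{i+1}\sigma_i\sigma_{i+1}$; $\sigma_j\sigma_i=\sigma_i\sigma_j$ if $|i-j|\geq2$; $a\sigma_j=\sigma_ja$ and $b\sigma_j=\sigma_jb$ for $j\geq2$; $b^{-1}\sigma_1a=\sigma_1a\sigma_1b^{-1}\sigma_1$; $a(\sigma_1a\sigma_1)=(\sigma_1a\sigma_1)a$; $b(\sigma_1^{-1}b\sigma_1)=(\sigma_1^{-1}b\sigma_1^{-1})b$; $\sigma_1\cdots\sigma_{n-2}\sigma_{n-1}^2\sigma_{n-2}\cdots\sigma_1=ba^{-1}b^{-1}a^{-1}$. $\Gamma_1=G$, $\Gamma_{i+1}=[\Gamma_i,G]$. *)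

(* Defs.v *)
(* B_n(K) is given by its presentation:
   elements are words in the generators, equality is the congruence generated
   by free cancellation and the defining relations. *)
From mathcomp Require Import all_boot.
Set Implicit Arguments. Unset Strict Implicit. Unset Printing Implicit Defensive.

(* Generators a, b, sigma_{i+1} for i : 'I_(n-1). *)
Inductive gen (n : nat) : Type :=
| GA : gen n
| GB : gen n
| GS : 'I_n.-1 -> gen n.

(* letter = generator with exponent (true = +1, false = -1) *)
Definition letter n := (gen n * bool)%type.
Definition word n := seq (letter n).

Definition winv n (w : word n) : word n := rev (map (fun x => (x.1, ~~ x.2)) w).

Definition wa n : word n := [:: (GA n, true)].
Definition wb n : word n := [:: (GB n, true)].
Definition ws n (i : 'I_n.-1) : word n := [:: (GS i, true)].

Definition sigprod n : word n := [seq (GS i, true) | i <- enum 'I_n.-1].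

Inductive krel (n : nat) : word n -> word n -> Prop :=
| kr_braid (i j : 'I_n.-1) : val j = (val i).+1 ->
    krel (ws i ++ ws j ++ ws i) (ws j ++ ws i ++ ws j)
| kr_far (i j : 'I_n.-1) : 2 <= val i - val j \/ 2 <= val j - val i ->
    krel (ws j ++ ws i) (ws i ++ ws j)
| kr_a (j : 'I_n.-1) : 1 <= val j -> krel (wa n ++ ws j) (ws j ++ wa n)
| kr_b (j : 'I_n.-1) : 1 <= val j -> krel (wb n ++ ws j) (ws j ++ wb n)
| kr_1 (s1 : 'I_n.-1) : val s1 = 0 ->
    krel (winv (wb n) ++ ws s1 ++ wa n)
         (ws s1 ++ wa n ++ ws s1 ++ winv (wb n) ++ ws s1)
| kr_2 (s1 : 'I_n.-1) : val s1 = 0 ->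
    krel (wa n ++ (ws s1 ++ wa n ++ ws s1)) ((ws s1 ++ wa n ++ ws s1) ++ wa n)
| kr_3 (s1 : 'I_n.-1) : val s1 = 0 ->
    krel (wb n ++ (winv (ws s1) ++ wb n ++ ws s1))
         ((winv (ws s1) ++ wb n ++ winv (ws s1)) ++ wb n)
| kr_4 : krel (sigprod n ++ rev (sigprod n))
              (wb n ++ winv (wa n) ++ winv (wb n) ++ winv (wa n)).

Inductive beq (n : nat) : word n -> word n -> Prop :=
| beq_refl w : beq w w
| beq_sym u v : beq u v -> beq v u
| beq_trans u v w : beq u v -> beq v w -> beq u w
| beq_free (u v : word n) (x : letter n) :
    beq (u ++ [:: x; (x.1, ~~ x.2)] ++ v) (u ++ v)
| beq_rel (u v l r : word n) : krel l r -> beq (u ++ l ++ v) (u ++ r ++ v).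

Inductive gsub (n : nat) (S : word n -> Prop) : word n -> Prop :=
| gsub_base w : S w -> gsub S w
| gsub_one : gsub S [::]
| gsub_mul u v : gsub S u -> gsub S v -> gsub S (u ++ v)
| gsub_inv u : gsub S u -> gsub S (winv u)
| gsub_eq u v : beq u v -> gsub S u -> gsub S v.

Definition comm n (x g : word n) : word n := winv x ++ winv g ++ x ++ g.

(* lcs k = Gamma_{k+1} *)
Fixpoint lcs (n k : nat) : word n -> Prop :=
  match k with
  | 0 => fun _ => True
  | k'.+1 => @gsub n (fun w => exists x g, lcs k' x /\ w = comm x g)
  end.

Definition Gamma (n i : nat) : word n -> Prop := @lcs n i.-1.

Definition nclosure n (r : word n) : word n -> Prop :=
  gsub (fun w => exists g, w = winv g ++ r ++ g).

(* Main.v *)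
Require Import Defs.
From mathcomp Require Import all_boot.
From Stdlib Require Import Setoid Morphisms.
From mathcomp Require Import zify.
Set Implicit Arguments. Unset Strict Implicit.

Section Basics.
Variable n : nat.
Implicit Types u v w x g : word n.

Lemma winv_cat u v : winv (u ++ v) = winv v ++ winv u.
Proof. by rewrite /winv map_cat rev_cat. Qed.

Lemma winv_winv u : winv (winv u) = u.
Proof. rewrite /winv map_rev revK -map_comp; elim: u => //= [[a b] u ->]. by rewrite negbK. Qed.

Lemma winv_nil : winv (n:=n) [::] = [::]. Proof. by []. Qed.

Lemma beq_ctx u v w z : beq u v -> beq (w ++ u ++ z) (w ++ v ++ z).
Proof.
elim=> {u v}.
- by move=> ?; apply: beq_refl.
- by move=> ? ? _ ?; apply: beq_sym.
- by move=> ? ? ? _ H1 _ H2; apply: beq_trans H1 H2.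
- move=> u v x; have := beq_free (w ++ u) (v ++ z) x. by rewrite -!catA.
- move=> u v l r H; have := beq_rel (w ++ u) (v ++ z) H. by rewrite -!catA.
Qed.
End Basics.

Add Parametric Relation n : (word n) (@beq n)
  reflexivity proved by (@beq_refl n) symmetry proved by (@beq_sym n)
  transitivity proved by (@beq_trans n) as beq_setoid.

Add Parametric Morphism n : (@cat (letter n)) with signature
  (@beq n) ==> (@beq n) ==> (@beq n) as cat_beq.
Proof.
move=> u u' Hu v v' Hv.
have H1 := beq_ctx [::] v Hu. have H2 := beq_ctx u' [::] Hv.
rewrite /= !cats0 in H1 H2. exact: beq_trans H1 H2.
Qed.


Add Parametric Morphism n (x : letter n) : (cons x) with signature
  (@beq n) ==> (@beq n) as cons_beq.
Proof. move=> u v H. by have := beq_ctx [:: x] [::] H; rewrite !cats0. Qed.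

#[export] Hint Resolve beq_refl : core.
Section Cancel.
Variable n : nat.
Implicit Types u v w x g : word n.

Lemma cancel_r0 u : beq (u ++ winv u) [::].
Proof.
elim: u => [|y u IH] /=; first reflexivity.
have -> : winv (y :: u) = winv u ++ [:: (y.1, ~~ y.2)].
  by rewrite /winv /= rev_cons -cats1.
rewrite catA IH /=. exact: (beq_free [::] [::] y).
Qed.

Lemma cancel_l0 u : beq (winv u ++ u) [::].
Proof. by have := cancel_r0 (winv u); rewrite winv_winv. Qed.

Lemma cancel_r u x : beq (u ++ winv u ++ x) x.
Proof. by rewrite catA cancel_r0. Qed.
Lemma cancel_l u x : beq (winv u ++ u ++ x) x.
Proof. by rewrite catA cancel_l0. Qed.
Lemma cancel_lr u x : beq ((x ++ u) ++ winv u) x.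
Proof. by rewrite -catA cancel_r0 cats0. Qed.
Lemma cancel_ll u x : beq ((x ++ winv u) ++ u) x.
Proof. by rewrite -catA cancel_l0 cats0. Qed.

Lemma winv_beq u v : beq u v -> beq (winv u) (winv v).
Proof.
move=> H.
have H1 : beq (winv u ++ v) [::] by rewrite -H cancel_l0.
have : beq ((winv u ++ v) ++ winv v) (winv v) by rewrite H1.
by rewrite -catA cancel_r0 cats0.
Qed.
End Cancel.

Add Parametric Morphism n : (@winv n) with signature (@beq n) ==> (@beq n) as winv_mor.
Proof. exact: winv_beq. Qed.

Class isNormal n (P : word n -> Prop) := {
  nb : forall u v, beq u v -> P u -> P v;
  n1 : P [::];
  nm : forall u v, P u -> P v -> P (u ++ v);
  ni : forall u, P u -> P (winv u);
  nc : forall g u, P u -> P (winv g ++ u ++ g) }.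

Definition em n (P : word n -> Prop) (u v : word n) := P (u ++ winv v).

Section EM.
Variables (n : nat) (P : word n -> Prop) (HP : isNormal P).
Implicit Types u v w x g : word n.

Lemma em_refl u : em P u u.
Proof. apply: (@nb _ _ HP _ _) (@n1 _ _ HP). by rewrite cancel_r0. Qed.
Lemma em_sym u v : em P u v -> em P v u.
Proof. move=> /(@ni _ _ HP _). by rewrite /em winv_cat winv_winv. Qed.
Lemma em_trans u v w : em P u v -> em P v w -> em P u w.
Proof.
move=> H1 H2; have := @nm _ _ HP _ _ H1 H2; apply: (@nb _ _ HP _ _).
by rewrite catA cancel_ll.
Qed.
End EM.

Add Parametric Relation n (P : word n -> Prop) (HP : isNormal P) : (word n) (em P)
  reflexivity proved by (em_refl HP) symmetry proved by (@em_sym n P HP)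
  transitivity proved by (@em_trans n P HP) as em_setoid.

Add Parametric Morphism n (P : word n -> Prop) (HP : isNormal P) : P with signature
  (@beq n) ==> iff as P_mor.
Proof. move=> u v H; split; apply: (@nb _ _ HP _ _) => //; by symmetry. Qed.

Add Parametric Morphism n (P : word n -> Prop) (HP : isNormal P) : (em P) with signature
  (@beq n) ==> (@beq n) ==> iff as em_mor.
Proof. move=> u u' Hu v v' Hv. rewrite /em. split; apply: (@nb _ _ HP _ _); by rewrite ?Hu ?Hv. Qed.

Add Parametric Morphism n (P : word n -> Prop) (HP : isNormal P) : (@cat (letter n)) with signature
  (em P) ==> (em P) ==> (em P) as cat_em.
Proof.
move=> u u' Hu v v' Hv. rewrite /em.
have := @nm _ _ HP _ _ (@nc _ _ HP (winv u) _ Hv) Hu. apply: (@nb _ _ HP _ _).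
rewrite winv_winv winv_cat !catA. by rewrite cancel_ll.
Qed.

Add Parametric Morphism n (P : word n -> Prop) (HP : isNormal P) (x : letter n) : (cons x) with signature
  (em P) ==> (em P) as cons_em.
Proof. move=> u v H. change (em P ([:: x] ++ u) ([:: x] ++ v)). rewrite H; reflexivity. Qed.

Add Parametric Morphism n (P : word n -> Prop) (HP : isNormal P) : (@winv n) with signature
  (em P) ==> (em P) as winv_em.
Proof.
move=> u v H. rewrite /em winv_winv.
have H' : P (v ++ winv u) by apply: em_sym.
have := @nc _ _ HP u _ H'. apply: (@nb _ _ HP _ _). by rewrite !catA cancel_ll.
Qed.

Lemma em_of_beq n (P : word n -> Prop) (HP : isNormal P) u v : beq u v -> em P u v.
Proof. move=> H. rewrite H. reflexivity. Qed.

Section Gsub.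
Variable n : nat.
Implicit Types u v w x g : word n.

Lemma gsub_mono (S T : word n -> Prop) :
  (forall w, S w -> gsub T w) -> forall w, gsub S w -> gsub T w.
Proof.
move=> H w; elim => {w}.
- exact: H.
- exact: gsub_one.
- by move=> u v _ Hu _ Hv; apply: gsub_mul.
- by move=> u _ Hu; apply: gsub_inv.
- by move=> u v Huv _ Hu; apply: gsub_eq Huv Hu.
Qed.

Lemma lcs_sub k w : @lcs n k.+1 w -> @lcs n k w.
Proof.
elim: k w => [//|k IH] w /=.
apply: gsub_mono => w' [x [g [Hx ->]]]; apply: gsub_base.
by exists x, g; split => //; apply: IH.
Qed.

Lemma lcs_le k m w : k <= m -> @lcs n m w -> @lcs n k w.
Proof.
elim: m => [|m IH]; first by rewrite leqn0 => /eqP ->.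
rewrite leq_eqVlt => /orP [/eqP -> //|]; rewrite ltnS => Hkm H.
by apply: IH => //; apply: lcs_sub.
Qed.

Lemma lcs_up (H12 : forall w, @lcs n 1 w -> @lcs n 2 w) k w :
  @lcs n k.+1 w -> @lcs n k.+2 w.
Proof.
elim: k w => [|k IH] w; first exact: H12.
move=> /=; apply: gsub_mono => w' [x [g [Hx ->]]]; apply: gsub_base.
by exists x, g; split => //; apply: IH.
Qed.

Lemma lcs_from1 (H12 : forall w, @lcs n 1 w -> @lcs n 2 w) k w :
  @lcs n 1 w -> @lcs n k.+1 w.
Proof. elim: k => [//|k IH] H; apply: lcs_up => //; exact: IH. Qed.

Lemma conj_comm x g : beq (winv g ++ x ++ g) (x ++ comm x g).
Proof. rewrite /comm (catA x (winv x)) cancel_r0. reflexivity. Qed.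

Lemma lcs_conj k x g : @lcs n k.+1 x -> @lcs n k.+1 (winv g ++ x ++ g).
Proof.
move=> Hx; apply: gsub_eq (beq_sym (conj_comm x g)) _.
apply: gsub_mul => //; apply: gsub_base; exists x, g; split => //.
exact: lcs_sub.
Qed.

Global Instance nclosure_normal (r : word n) : isNormal (nclosure r).
Proof.
split.
- by move=> u v H Hu; apply: gsub_eq H Hu.
- exact: gsub_one.
- by move=> u v; apply: gsub_mul.
- by move=> u; apply: gsub_inv.
- move=> h u; elim => {u}.
  + move=> w [g ->]; apply: gsub_base; exists (g ++ h).
    by rewrite winv_cat -!catA.
  + rewrite cat0s; apply: gsub_eq (beq_sym (cancel_l0 _)) (gsub_one _).
  + move=> u v _ Hu _ Hv; apply: gsub_eq (gsub_mul Hu Hv).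
    by rewrite -!catA cancel_r.
  + move=> u _ Hu; have := gsub_inv Hu.
    by rewrite !winv_cat winv_winv catA.
  + move=> u v Huv _ Hu; apply: gsub_eq Hu. by rewrite Huv.
Qed.
End Gsub.

Lemma kbeq n (l r : word n) : krel l r -> beq l r.
Proof. move=> H; have := beq_rel [::] [::] H; by rewrite /= !cats0. Qed.

Lemma freeP n (g : gen n) t : beq ((g,true)::(g,false)::t) t.
Proof. exact: (beq_free [::] t (g,true)). Qed.
Lemma freeN n (g : gen n) t : beq ((g,false)::(g,true)::t) t.
Proof. exact: (beq_free [::] t (g,false)). Qed.

Section Main.
Variables (n : nat) (hn : 3 <= n) (s1 s2 : 'I_n.-1) (h1 : val s1 = 0) (h2 : val s2 = 1).

Local Notation X := (GS s1, true).
Local Notation X' := (GS s1, false).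
Local Notation Y := (GS s2, true).
Local Notation Y' := (GS s2, false).
Local Notation A := (GA n, true).
Local Notation B := (GB n, true).
Local Notation B' := (GB n, false).

Definition d : word n := [:: Y'; X].

Lemma braid_t t : beq (X::Y::X::t) (Y::X::Y::t).
Proof.
have H : beq [:: X; Y; X] [:: Y; X; Y] by exact: (kbeq (kr_braid (i:=s1) (j:=s2) (etrans h2 (congr1 S (esym h1))))).
change (beq ([:: X; Y; X] ++ t) ([:: Y; X; Y] ++ t)). by rewrite H.
Qed.

Lemma claim1 : beq [:: X; Y; X'; Y'] d.
Proof.
rewrite -(freeN (GS s2) [:: X; Y; X'; Y']) -braid_t freeP freeP. reflexivity.
Qed.

Lemma d_lcs1 : lcs 1 d.
Proof.
apply: gsub_eq claim1 _; apply: gsub_base; by exists [:: X'], [:: Y'].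
Qed.

Lemma d_lcs2 : lcs 2 d.
Proof.
have Hc : lcs 2 (comm (winv d) [:: Y']).
  apply: gsub_base; exists (winv d), [:: Y']; split => //. exact: gsub_inv d_lcs1.
have H2 := lcs_conj [:: Y'] Hc; apply: (gsub_eq _ H2).
rewrite /= freeP freeP. exact: claim1.
Qed.

Definition N := nclosure d.
Local Notation E := (em N).

Lemma N_lcs2 w : N w -> lcs 2 w.
Proof. apply: gsub_mono => w' [g ->]. exact: (lcs_conj g d_lcs2). Qed.

Lemma d_N : N d.
Proof. apply: gsub_base; exists [::]. by rewrite cats0. Qed.

Lemma emt (u v : word n) : E u v -> forall t, E (u ++ t) (v ++ t).
Proof. move=> H t; rewrite H; reflexivity. Qed.

Lemma emcl (w u v : word n) : E (w ++ u) (w ++ v) -> E u v.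
Proof. move=> H. rewrite -(cancel_l w u) H cancel_l. reflexivity. Qed.

Lemma emcr (w u v : word n) : E (u ++ w) (v ++ w) -> E u v.
Proof. move=> H. rewrite -(cancel_lr w u) H cancel_lr. reflexivity. Qed.

Lemma inv_swap (u v : word n) : E (u ++ v) (v ++ u) -> E (winv u ++ v) (v ++ winv u).
Proof.
move=> H. transitivity (winv u ++ ((v ++ u) ++ winv u)).
  rewrite cancel_lr; reflexivity.
rewrite -H -(catA u v) cancel_l; reflexivity.
Qed.

Lemma F1 : E [:: X] [:: Y].
Proof.
have := @nc _ _ (nclosure_normal d) [:: X'] _ d_N.
apply: (@nb _ _ (nclosure_normal d) _ _).
rewrite /= freeP. reflexivity.
Qed.

Lemma F2 (i : 'I_n.-1) : E [:: (GS i, true)] [:: X].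
Proof.
suff H : forall k, (forall i : 'I_n.-1, val i = k -> E [:: (GS i, true)] [:: X]) /\
                  (forall i : 'I_n.-1, val i = k.+1 -> E [:: (GS i, true)] [:: X]).
  by case: (H (val i)) => H0 _; apply: H0.
elim=> [|k [IH0 IH1]].
  split=> j Hj.
    have -> : j = s1 by apply: val_inj; rewrite /= Hj h1.
    reflexivity.
  have -> : j = s2 by apply: val_inj; rewrite /= Hj h2.
  symmetry; exact: F1.
split=> // j Hj.
have Hk1 : k.+1 < n.-1 by have := ltn_ord j; rewrite Hj; lia.
have Hk0 : k < n.-1 by lia.
pose i1 := Ordinal Hk1. pose i0 := Ordinal Hk0.
have Hbr : E [:: (GS i1, true); (GS j, true); (GS i1, true)]
             [:: (GS j, true); (GS i1, true); (GS j, true)].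
  apply: em_of_beq; exact: (kbeq (kr_braid (i:=i1) (j:=j) Hj)).
have Hfar : E [:: (GS i0, true); (GS j, true)] [:: (GS j, true); (GS i0, true)].
  apply: em_of_beq; apply: (kbeq (kr_far (i:=j) (j:=i0) _)); left; rewrite Hj /=; lia.
have HA t : E ((GS i0, true) :: t) (X :: t) by exact: (emt (IH0 i0 erefl) t).
have HB t : E ((GS i1, true) :: t) (X :: t) by exact: (emt (IH1 i1 erefl) t).
rewrite !HA in Hfar. rewrite !HB in Hbr.
have Hf t : E (X :: (GS j, true) :: t) ((GS j, true) :: X :: t) by exact: (emt Hfar t).
rewrite !Hf in Hbr.
have := emcl (w := [:: (GS j, true)]) (u := [:: X; X]) (v := [:: (GS j, true); X]) Hbr.
move=> /(emcr (w := [:: X]) (u := [:: X]) (v := [:: (GS j, true)])) H.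
by symmetry.
Qed.

Lemma F2t (i : 'I_n.-1) t : E ((GS i, true) :: t) (X :: t).
Proof. exact: (emt (F2 i) t). Qed.

Lemma sym_swap (u v : word n) : E (u ++ v) (v ++ u) -> E (v ++ u) (u ++ v).
Proof. by move=> H; symmetry. Qed.

Lemma lswap (g h : gen n) :
  E [:: (g, true); (h, true)] [:: (h, true); (g, true)] ->
  forall b c, E [:: (g, b); (h, c)] [:: (h, c); (g, b)].
Proof.
move=> H b c.
have Hft : E [:: (g, false); (h, true)] [:: (h, true); (g, false)]
  by exact: (inv_swap (u := [:: (g, true)]) (v := [:: (h, true)]) H).
have Htf : E [:: (g, true); (h, false)] [:: (h, false); (g, true)].
  symmetry; exact: (inv_swap (u := [:: (h, true)]) (v := [:: (g, true)]) (sym_swap (u := [:: (g, true)]) (v := [:: (h, true)]) H)).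
case: b; case: c => //.
have := inv_swap (u := [:: (h, true)]) (v := [:: (g, false)])
           (sym_swap (u := [:: (g, false)]) (v := [:: (h, true)]) Hft).
by move=> K; symmetry.
Qed.

Lemma GC_AS (j : 'I_n.-1) : E [:: A; (GS j, true)] [:: (GS j, true); A].
Proof.
change (E ([:: A] ++ [:: (GS j, true)]) ([:: (GS j, true)] ++ [:: A])).
rewrite (F2 j) F1 /=. apply: em_of_beq.
apply: (kbeq (kr_a (j := s2) _)). by rewrite h2.
Qed.

Lemma GC_BS (j : 'I_n.-1) : E [:: B; (GS j, true)] [:: (GS j, true); B].
Proof.
change (E ([:: B] ++ [:: (GS j, true)]) ([:: (GS j, true)] ++ [:: B])).
rewrite (F2 j) F1 /=. apply: em_of_beq.
apply: (kbeq (kr_b (j := s2) _)). by rewrite h2.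
Qed.

Lemma GC_SS (i j : 'I_n.-1) : E [:: (GS i, true); (GS j, true)] [:: (GS j, true); (GS i, true)].
Proof.
change (E ([:: (GS i, true)] ++ [:: (GS j, true)]) ([:: (GS j, true)] ++ [:: (GS i, true)])).
rewrite (F2 i) (F2 j). reflexivity.
Qed.

Lemma XB b c t : E ((GS s1, b) :: (GB n, c) :: t) ((GB n, c) :: (GS s1, b) :: t).
Proof. exact: (emt (lswap (sym_swap (u := [:: B]) (v := [:: X]) (GC_BS s1)) b c) t). Qed.


Lemma XA b c t : E ((GS s1, b) :: (GA n, c) :: t) ((GA n, c) :: (GS s1, b) :: t).
Proof. exact: (emt (lswap (sym_swap (u := [:: A]) (v := [:: X]) (GC_AS s1)) b c) t). Qed.

Lemma XX : E [:: X; X] [::].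
Proof.
have Hk3 : E [:: B; X'; B; X] [:: X'; B; X'; B].
  apply: em_of_beq; exact: (kbeq (kr_3 h1)).
rewrite !XB freeN in Hk3.
have H := emcl (w := [:: B; B]) (u := [::]) (v := [:: X'; X']) Hk3.
have K : E (winv [::]) (winv [:: X'; X']) by exact: (@winv_em_Proper n N (nclosure_normal d) _ _ H).
symmetry; exact: K.
Qed.

Lemma XXt t : E (X :: X :: t) t.
Proof. exact: (emt XX t). Qed.

Lemma GC_AB : E [:: A; B] [:: B; A].
Proof.
have Hk1 : E [:: B'; X; A] [:: X; A; X; B'; X].
  apply: em_of_beq; exact: (kbeq (kr_1 h1)).
have XBr b c t : E ((GB n, c) :: (GS s1, b) :: t) ((GS s1, b) :: (GB n, c) :: t)
  by symmetry; apply: XB.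
have XAr b c t : E ((GA n, c) :: (GS s1, b) :: t) ((GS s1, b) :: (GA n, c) :: t)
  by symmetry; apply: XA.
rewrite !XBr !XAr in Hk1. rewrite XXt in Hk1.
have H := emcl (w := [:: X]) (u := [:: B'; A]) (v := [:: A; B']) Hk1.
have := inv_swap (u := [:: B']) (v := [:: A]) H. by move=> K; symmetry.
Qed.


Lemma GC (g h : gen n) : E [:: (g, true); (h, true)] [:: (h, true); (g, true)].
Proof.
case: g => [||i]; case: h => [||j]; try reflexivity.
- exact: GC_AB.
- exact: GC_AS.
- exact: (sym_swap (u := [:: A]) (v := [:: B]) GC_AB).
- exact: GC_BS.
- exact: (sym_swap (u := [:: A]) (v := [:: (GS i, true)]) (GC_AS i)).
- exact: (sym_swap (u := [:: B]) (v := [:: (GS i, true)]) (GC_BS i)).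
- exact: GC_SS.
Qed.

Lemma LC (p q : letter n) t : E (p :: q :: t) (q :: p :: t).
Proof. case: p => g b; case: q => h c. exact: (emt (lswap (GC g h) b c) t). Qed.

Lemma LW (p : letter n) v : E (p :: v) (v ++ [:: p]).
Proof.
elim: v => [|q v IH] /=; first reflexivity.
rewrite LC IH. reflexivity.
Qed.

Lemma WW (u v : word n) : E (u ++ v) (v ++ u).
Proof.
elim: u => [|p u IH] /=; first by rewrite cats0; reflexivity.
rewrite IH. change (E ((p :: v) ++ u) (v ++ p :: u)). rewrite LW -catA. reflexivity.
Qed.

Lemma comm_N (x g : word n) : N (comm x g).
Proof.
have H : E (comm x g) [::].
  rewrite /comm (catA (winv g) x g) (WW (winv g) x) -(catA x) cancel_l cancel_l0.
  reflexivity.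
by move: H; rewrite /em winv_nil cats0.
Qed.

End Main.

Ltac dsw := repeat (match goal with |- context [if ?a == ?b then _ else _] =>
  lazymatch a with context [if _ then _ else _] => fail | _ => case: (@eqP _ a b) => ? end end; simpl).

Definition swp (i k : nat) : nat := if k == i then i.+1 else if k == i.+1 then i else k.

Lemma swpK i k : swp i (swp i k) = k.
Proof. rewrite /swp; dsw; lia. Qed.

Lemma swp_braid i k : swp i (swp i.+1 (swp i k)) = swp i.+1 (swp i (swp i.+1 k)).
Proof. rewrite /swp; dsw; lia. Qed.

Lemma swp_far i j k : 2 <= i - j \/ 2 <= j - i -> swp i (swp j k) = swp j (swp i k).
Proof. move=> H; rewrite /swp; dsw; lia. Qed.

Section Eval.
Variable n : nat.
Definition letf (p : letter n) : nat -> nat :=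
  match p.1 with GS i => swp (val i) | _ => id end.
Definition evalw (w : word n) (k : nat) : nat := foldr (fun p f => letf p \o f) id w k.

Lemma evalw_cons p u k : evalw (p :: u) k = letf p (evalw u k).
Proof. by []. Qed.

Lemma evalw_cat u v k : evalw (u ++ v) k = evalw u (evalw v k).
Proof. by elim: u => // p u IH; rewrite cat_cons !evalw_cons IH. Qed.

Lemma letfK p k : letf p (letf p k) = k.
Proof. rewrite /letf; case: p.1 => //= i; exact: swpK. Qed.

Lemma evalw_rev u k : evalw (u ++ rev u) k = k.
Proof.
elim: u k => // p u IH k.
rewrite rev_cons -cats1 catA evalw_cat cat_cons !evalw_cons IH. exact: letfK.
Qed.

Lemma krel_eval l r : krel l r -> forall k, evalw l k = evalw r k.
Proof.
case=> /=.
- move=> i j Hj k; rewrite /evalw /letf /= Hj.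
  exact: swp_braid.
- move=> i j H k; rewrite /evalw /letf /=. symmetry; exact: swp_far.
- by [].
- by [].
- move=> s1 _ k; rewrite /evalw /letf /= swpK //.
- by move=> s1 _ k; rewrite /evalw /letf /=.
- by move=> s1 _ k; rewrite /evalw /letf /= swpK.
- move=> k; rewrite evalw_rev. by [].
Qed.

Lemma beq_eval u v : beq u v -> forall k, evalw u k = evalw v k.
Proof.
elim=> {u v}.
- by [].
- by move=> u v _ H k; rewrite H.
- by move=> u v w _ H1 _ H2 k; rewrite H1 H2.
- move=> u v p k; rewrite !evalw_cat; congr (evalw u _).
  rewrite !evalw_cons. exact: letfK.
- move=> u v l r H k; rewrite !evalw_cat. by rewrite (krel_eval H).
Qed.
End Eval.
Unset Implicit Arguments. Set Strict Implicit.

Theorem proposition5p18 (n : nat) (hn : 3 <= n)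
  (s1 s2 : 'I_n.-1) (h1 : val s1 = 0) (h2 : val s2 = 1) :
  (forall i, 3 <= i -> forall w : word n, Gamma 2 w <-> Gamma i w) /\
  (forall w : word n, Gamma 2 w <-> nclosure (winv (ws s2) ++ ws s1) w) /\
  (exists w : word n, Gamma 2 w /\ ~ beq w [::]) /\
  (exists w : word n, (forall i, 1 <= i -> Gamma i w) /\ ~ beq w [::]).
Proof.
have G2N : forall w : word n, lcs 1 w -> N s1 s2 w.
  move=> w; apply: gsub_mono => w' [x [g [_ ->]]]. exact: (comm_N hn h1 h2).
have H12 : forall w : word n, lcs 1 w -> lcs 2 w.
  move=> w H; apply: (N_lcs2 h1 h2); exact: G2N.
have Hall : forall i, 2 <= i -> forall w : word n, Gamma 2 w <-> Gamma i w.
  move=> i Hi w; rewrite /Gamma.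
  have -> : i.-1 = (i.-2).+1 by lia.
  split; first exact: lcs_from1.
  apply: lcs_le; lia.
have Hd : ~ beq (d s1 s2) [::].
  move=> /beq_eval /(_ 0). rewrite /evalw /letf /= h1 h2 /swp /=. by [].
split; first by move=> i Hi; apply: Hall; lia.
split.
  move=> w; split; first exact: G2N.
  move=> /(N_lcs2 h1 h2); apply: lcs_sub.
split; first by exists (d s1 s2); split => //; exact: d_lcs1.
exists (d s1 s2); split => // i Hi.
case: i Hi => [//|[|i]] Hi; first by [].
by apply/(Hall i.+2 _ _).1; [lia|exact: d_lcs1].
Qed.
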